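(* Let $f : X \to \mathbb{R}$ be semi-Borel. If Player I has a winning strategy in $\Gamma(f)$, then there exist $r \in \mathbb{R}$ and a Cantor set $C \subseteq X$ such that $C \cap \{f \ge r\}$ is countable and dense in $C$.
   Context: Let $A$ be a non-empty countable set and $T$ a pruned tree on $A$ (a set of finite sequences of elements of $A$, closed under initial segments, in which every sequence has a proper extension in $T$). Let $X$ be the set of infinite branches of $T$, with the topology generated by the cylinder sets $O(s) = \{x \in X : s \text{ is an initial segment of } x\}$, $s \in T$. $f$ is semi-Borel if for each $r \in \mathbb{R}$ the set $\{f \ge r\} = \{x \in X : f(x) \ge r\}$ is co-analytic. A Cantor set is a subset homeomorphic to the middle-thirds Cantor set. The game $\Gamma(f)$: Player I and Player II alternate, Player I moving first; Player I plays $x_0, x_1, \dots \in A$ subject to $(x_0,\dots,x_t) \in T$ for all $t$, and after each move $x_t$ Player II plays a real number $v_t$. Player II wins the run iff $f(x_0,x_1,\dots) = \limsup_{t\to\infty} v_t$; otherwise Player I wins. *)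

(* Defs.v *)
From Stdlib Require Import Reals List.
From Coquelicot Require Import Coquelicot.
Import ListNotations.
Open Scope R_scope.

Definition prefix {B : Type} (x : nat -> B) (n : nat) : list B :=
  map x (seq 0 n).

Definition countable_type (A : Type) : Prop :=
  exists enc : A -> nat, forall a b, enc a = enc b -> a = b.

Definition countable_set {B : Type} (S : B -> Prop) : Prop :=
  exists g : nat -> B, forall b, S b -> exists n, g n = b.

Definition is_tree {A : Type} (T : list A -> Prop) : Prop :=
  T [] /\ forall s t, T (s ++ t) -> T s.

Definition is_pruned {A : Type} (T : list A -> Prop) : Prop :=
  forall s, T s -> exists a, T (s ++ [a]).

Definition body {A : Type} (T : list A -> Prop) (x : nat -> A) : Prop :=
  forall n, T (prefix x n).

(** Topology on A^N (A discrete, product topology), whose restriction to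
    [body T] is the topology generated by the cylinders O(s).  Subspaces
    carry the induced topology. *)
Definition open_seq {A : Type} (U : (nat -> A) -> Prop) : Prop :=
  forall x, U x -> exists n, forall y, prefix y n = prefix x n -> U y.

(** Analytic subsets of A^N (hence of X): projections of closed subsets of
    A^N x N^N; closed subsets of A^N x N^N are exactly the sets
    {(x,y) | forall n, U (x|n) (y|n)}. *)
Definition analytic {A : Type} (S : (nat -> A) -> Prop) : Prop :=
  exists U : list A -> list nat -> Prop,
    forall x, S x <-> exists y : nat -> nat, forall n, U (prefix x n) (prefix y n).

Definition coanalytic_in {A : Type} (X P : (nat -> A) -> Prop) : Prop :=
  analytic (fun x => X x /\ ~ P x).

Definition semi_Borel {A : Type} (T : list A -> Prop) (f : (nat -> A) -> R) : Prop :=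
  forall r : R, coanalytic_in (body T) (fun x => body T x /\ f x >= r).

(** The middle-thirds Cantor set: intersection of the stages C_n, with
    C_0 = [0,1] and C_{n+1} = C_n/3 ∪ (2/3 + C_n/3). *)
Fixpoint cantor_stage (n : nat) (x : R) : Prop :=
  match n with
  | O => 0 <= x <= 1
  | S m => cantor_stage m (3 * x) \/ cantor_stage m (3 * x - 2)
  end.

Definition middle_thirds_cantor (x : R) : Prop := forall n, cantor_stage n x.

(** C ⊆ A^N is homeomorphic (in the induced topologies) to a subset K ⊆ R via h:
    h is a bijection K -> C, continuous, and with continuous inverse
    (equivalently: open sets of K correspond exactly to open sets of C). *)
Definition homeomorphic_R_seq {A : Type} (K : R -> Prop) (C : (nat -> A) -> Prop) : Prop :=
  exists h : R -> (nat -> A),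
    (forall k, K k -> C (h k)) /\
    (forall k1 k2, K k1 -> K k2 -> h k1 = h k2 -> k1 = k2) /\
    (forall c, C c -> exists k, K k /\ h k = c) /\
    (forall U, open_seq U -> exists V, open V /\ forall k, K k -> (U (h k) <-> V k)) /\
    (forall V, open V -> exists U, open_seq U /\ forall k, K k -> (V k <-> U (h k))).

Definition Cantor_set {A : Type} (C : (nat -> A) -> Prop) : Prop :=
  homeomorphic_R_seq middle_thirds_cantor C.

(** D is dense in C (induced topology): every non-empty relatively open
    subset of C, i.e. every basic one C ∩ O(c|n), meets D. *)
Definition dense_in {A : Type} (D C : (nat -> A) -> Prop) : Prop :=
  forall c n, C c -> exists d, D d /\ prefix d n = prefix c n.

(** The game Γ(f).  A strategy for Player I maps the list (v_0,...,v_{t-1})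
    of Player II's previous moves to Player I's next move x_t (Player I's own
    previous moves are determined by these). *)
Definition play_I {A : Type} (sigma : list R -> A) (v : nat -> R) : nat -> A :=
  fun t => sigma (prefix v t).

(** Player II wins a run iff f(x) = limsup v_t (limsup in the extended reals).
    A winning strategy for Player I always plays legally and makes Player II
    lose against every sequence of moves of Player II. *)
Definition I_winning_strategy {A : Type} (T : list A -> Prop) (f : (nat -> A) -> R)
    (sigma : list R -> A) : Prop :=
  forall v : nat -> R,
    (forall t, T (prefix (play_I sigma v) (S t))) /\
    Finite (f (play_I sigma v)) <> LimSup_seq v.

(* Main.v *)
Require Import Defs.
From Stdlib Require Import Reals List.
From Coquelicot Require Import Coquelicot.
From Stdlib Require Import Lia Lra Classical ClassicalEpsilon FunctionalExtensionality Cantor ZArith.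
Import ListNotations.
Open Scope R_scope.

Definition agree {B : Type} (n : nat) (x y : nat -> B) : Prop :=
  forall i, (i < n)%nat -> x i = y i.

Lemma prefix_S {B : Type} (x : nat -> B) n : prefix x (S n) = prefix x n ++ [x n].
Proof. unfold prefix. rewrite seq_S, map_app. reflexivity. Qed.

Lemma prefix_agree {B : Type} (x y : nat -> B) n :
  prefix x n = prefix y n <-> agree n x y.
Proof.
  induction n as [|n IH].
  - split; [intros _ i Hi; lia | reflexivity].
  - rewrite !prefix_S. split.
    + intros H. apply app_inj_tail in H as [H1 H2]. inversion H2.
      apply IH in H1. intros i Hi. destruct (Nat.eq_dec i n); [subst; auto|].
      apply H1; lia.
    + intros H. f_equal.
      * apply IH. intros i Hi; apply H; lia.
      * rewrite (H n); auto.
Qed.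

Lemma agree_le {B : Type} (x y : nat -> B) a b :
  agree a x y -> (b <= a)%nat -> agree b x y.
Proof. intros H Hb i Hi. apply H. lia. Qed.

Lemma agree_sym {B : Type} (x y : nat -> B) a : agree a x y -> agree a y x.
Proof. intros H i Hi. symmetry. auto. Qed.

Lemma agree_trans {B : Type} (x y z : nat -> B) a :
  agree a x y -> agree a y z -> agree a x z.
Proof. intros H1 H2 i Hi. rewrite H1 by auto. auto. Qed.

Lemma agree_refl {B : Type} (x : nat -> B) a : agree a x x.
Proof. intros i _. reflexivity. Qed.

Lemma prefix_length {B : Type} (x : nat -> B) n : length (prefix x n) = n.
Proof. unfold prefix. rewrite length_map, length_seq. reflexivity. Qed.

Definition eventually_false (p : nat -> bool) : Prop :=
  exists k0, forall k, (k0 <= k)%nat -> p k = false.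

Lemma testbit_surj (p : nat -> bool) : eventually_false p ->
  exists n, forall i, Nat.testbit n i = p i.
Proof.
  intros [k0 Hk]. revert p Hk. induction k0 as [|k0 IH]; intros p Hk.
  - exists 0%nat. intros i. rewrite Hk by lia. apply Nat.bits_0.
  - destruct (IH (fun i => p (S i))) as [n' Hn'].
    { intros k Hk'. apply Hk. lia. }
    exists (2 * n' + (if p 0%nat then 1 else 0))%nat.
    intros [|i].
    + destruct (p 0%nat) eqn:E.
      * apply Nat.testbit_odd_0.
      * rewrite Nat.add_0_r. apply Nat.testbit_even_0.
    + destruct (p 0%nat).
      * rewrite Nat.testbit_odd_succ by lia. apply Hn'.
      * rewrite Nat.add_0_r, Nat.testbit_even_succ by lia. apply Hn'.
Qed.

Definition b2r (b : bool) : R := if b then 2 else 0.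

Fixpoint addr (p : nat -> bool) (n : nat) : R :=
  match n with
  | O => 0
  | S n => (b2r (p O) + addr (fun i => p (S i)) n) / 3
  end.

Lemma pow3_pos n : 0 < 3 ^ n.
Proof. apply pow_lt. lra. Qed.

Lemma inv3_pos n : 0 < / 3 ^ n.
Proof. apply Rinv_0_lt_compat, pow3_pos. Qed.

Lemma inv3_S n : / 3 ^ (S n) = / 3 ^ n / 3.
Proof. simpl. field. apply Rgt_not_eq, pow3_pos. Qed.

Lemma inv3_le1 n : / 3 ^ n <= 1.
Proof.
  induction n. simpl. lra. rewrite inv3_S. pose proof (inv3_pos n). lra.
Qed.

Lemma addr_agree p p' n : agree n p p' -> addr p n = addr p' n.
Proof.
  revert p p'. induction n; intros p p' H; simpl; auto.
  rewrite (H O) by lia. rewrite (IHn (fun i => p (S i)) (fun i => p' (S i))); auto.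
  intros i Hi. apply H. lia.
Qed.

Lemma addr_bounds p n : 0 <= addr p n /\ addr p n + / 3 ^ n <= 1.
Proof.
  revert p. induction n; intros p.
  - simpl. split; [lra|]. rewrite Rinv_1. lra.
  - destruct (IHn (fun i => p (S i))) as [H1 H2].
    cbn [addr]. rewrite inv3_S.
    unfold b2r; destruct (p O); split; lra.
Qed.

Lemma addr_nested p m n : (m <= n)%nat ->
  addr p m <= addr p n /\ addr p n + / 3 ^ n <= addr p m + / 3 ^ m.
Proof.
  revert p n. induction m; intros p n Hmn.
  - destruct (addr_bounds p n). simpl. rewrite Rinv_1. lra.
  - destruct n as [|n]; [lia|].
    destruct (IHm (fun i => p (S i)) n) as [H1 H2]; [lia|].
    cbn [addr]. rewrite !inv3_S. lra.
Qed.

Definition inI (p : nat -> bool) n x := addr p n <= x <= addr p n + / 3 ^ n.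

Lemma gap p p' m x y : ~ agree m p p' -> inI p m x -> inI p' m y ->
  / 3 ^ m <= Rabs (x - y).
Proof.
  revert p p' x y. induction m; intros p p' x y Hna Hx Hy.
  - exfalso. apply Hna. intros i Hi. lia.
  - unfold inI in *. cbn [addr] in *. rewrite inv3_S in *.
    destruct (Bool.bool_dec (p O) (p' O)) as [E|E].
    + assert (Hna' : ~ agree m (fun i => p (S i)) (fun i => p' (S i))).
      { intros Ha. apply Hna. intros [|i] Hi; auto. apply Ha. lia. }
      specialize (IHm _ _ (3 * x - b2r (p O)) (3 * y - b2r (p' O)) Hna').
      rewrite <- E in *.
      assert (/ 3 ^ m <= Rabs (3 * x - b2r (p O) - (3 * y - b2r (p O)))).
      { apply IHm; lra. }
      replace (3 * x - b2r (p O) - (3 * y - b2r (p O))) with (3 * (x - y)) in H by ring.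
      rewrite Rabs_mult, Rabs_right in H by lra. lra.
    + destruct (addr_bounds (fun i => p (S i)) m).
      destruct (addr_bounds (fun i => p' (S i)) m).
      pose proof (inv3_le1 m).
      unfold b2r in *. destruct (p O), (p' O); try congruence.
      * rewrite Rabs_right; lra.
      * rewrite Rabs_left1; lra.
Qed.

Lemma stage_char n x : cantor_stage n x <-> exists p, inI p n x.
Proof.
  revert x. induction n; intros x.
  - simpl. unfold inI. simpl. rewrite Rinv_1. split.
    + intros H. exists (fun _ => false). lra.
    + intros [p Hp]. lra.
  - cbn [cantor_stage]. rewrite !IHn. unfold inI. cbn [addr]. rewrite inv3_S. split.
    + intros [[p Hp]|[p Hp]].
      * exists (fun i => match i with O => false | S i => p i end).
        change (addr (fun i => p i) n) with (addr p n). unfold b2r. lra.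
      * exists (fun i => match i with O => true | S i => p i end).
        change (addr (fun i => p i) n) with (addr p n). unfold b2r. lra.
    + intros [p Hp]. unfold b2r in Hp. destruct (p O) eqn:E.
      * right. exists (fun i => p (S i)). lra.
      * left. exists (fun i => p (S i)). lra.
Qed.

Lemma pow3_small eps : 0 < eps -> exists n, / 3 ^ n < eps.
Proof.
  intros He. destruct (archimed_cor1 eps He) as [N [HN HN0]].
  assert (Hn : forall n, INR n < 3 ^ n).
  { induction n. simpl; lra. rewrite S_INR. simpl.
    assert (1 <= 3 ^ n). { clear. induction n; simpl; lra. } lra. }
  exists N. apply Rle_lt_trans with (/ INR N); auto.
  apply Rlt_le, Rinv_lt_contravar; auto.
  apply Rmult_lt_0_compat; [apply lt_0_INR; auto|apply pow3_pos].
Qed.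

Lemma small_all_eq x y : (forall n, Rabs (x - y) <= / 3 ^ n) -> x = y.
Proof.
  intros H. destruct (Req_dec x y) as [|Hne]; auto. exfalso.
  assert (0 < Rabs (x - y)) by (apply Rabs_pos_lt; lra).
  destruct (pow3_small _ H0) as [n Hn]. specialize (H n). lra.
Qed.

Definition psiE p x := exists n, x = addr p n.
Lemma psiE_bound p : bound (psiE p).
Proof. exists 1. intros x [n ->]. destruct (addr_bounds p n). pose proof (inv3_pos n). lra. Qed.
Lemma psiE_ne p : exists x, psiE p x.
Proof. exists 0. exists O. reflexivity. Qed.
Definition psi p : R := proj1_sig (completeness (psiE p) (psiE_bound p) (psiE_ne p)).

Lemma psi_in p n : inI p n (psi p).
Proof.
  unfold psi. destruct (completeness _ _ _) as [m [Hub Hl]]. simpl. split.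
  - apply Hub. exists n. reflexivity.
  - apply Hl. intros x [k ->]. destruct (Compare_dec.le_ge_dec k n).
    + destruct (addr_nested p k n) as [H1 H2]; auto. pose proof (inv3_pos n). lra.
    + destruct (addr_nested p n k) as [H1 H2]; auto. pose proof (inv3_pos k). lra.
Qed.

Lemma inI_agree p p' n x : agree n p p' -> inI p n x -> inI p' n x.
Proof. intros H. unfold inI. rewrite (addr_agree p p' n H). auto. Qed.

Lemma psi_agree p p' n : agree n p p' -> Rabs (psi p - psi p') <= / 3 ^ n.
Proof.
  intros H. pose proof (psi_in p n) as H1. pose proof (psi_in p' n) as H2.
  apply (inI_agree p' p n) in H2; [|apply agree_sym; auto].
  unfold inI in *. apply Rabs_le. lra.
Qed.

Lemma psi_close p p' n : Rabs (psi p - psi p') < / 3 ^ n -> agree n p p'.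
Proof.
  intros H. apply NNPP. intros Hna.
  pose proof (gap p p' n (psi p) (psi p') Hna (psi_in p n) (psi_in p' n)). lra.
Qed.

Lemma psi_inj p p' : psi p = psi p' -> p = p'.
Proof.
  intros H. apply functional_extensionality. intros i.
  apply (psi_close p p' (S i)). rewrite H, Rminus_diag, Rabs_R0. apply inv3_pos. lia.
Qed.

Lemma K_psi p : middle_thirds_cantor (psi p).
Proof. intros n. apply stage_char. exists p. apply psi_in. Qed.

Lemma psi_surj k : middle_thirds_cantor k -> exists p, psi p = k.
Proof.
  intros Hk.
  set (pn := fun n => epsilon (inhabits (fun _ : nat => false)) (fun p => inI p n k)).
  assert (Hpn : forall n, inI (pn n) n k).
  { intros n. unfold pn. apply epsilon_spec. apply stage_char. apply Hk. }
  assert (Hcons : forall m n, (m <= n)%nat -> agree m (pn n) (pn m)).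
  { intros m n Hmn. apply NNPP. intros Hna.
    assert (inI (pn n) m k).
    { destruct (addr_nested (pn n) m n Hmn). destruct (Hpn n). split; lra. }
    pose proof (gap _ _ m k k Hna H (Hpn m)).
    rewrite Rminus_diag, Rabs_R0 in H0. pose proof (inv3_pos m). lra. }
  set (p := fun i => pn (S i) i).
  exists p. symmetry. apply small_all_eq. intros n.
  assert (Ha : agree n p (pn n)).
  { intros i Hi. unfold p. symmetry. apply (Hcons (S i) n); lia. }
  pose proof (psi_in p n).
  pose proof (inI_agree (pn n) p n k (agree_sym _ _ _ Ha) (Hpn n)).
  unfold inI in *. apply Rabs_le. lra.
Qed.

Lemma cantor_wrap {A : Type} (h : (nat -> bool) -> nat -> A) :
  (forall p p', h p = h p' -> p = p') ->
  (forall p p' n, agree n p p' -> agree n (h p) (h p')) ->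
  (forall p n, exists N, forall p', agree N (h p) (h p') -> agree n p p') ->
  Cantor_set (fun c => exists p, h p = c).
Proof.
  intros Hinj Hc Hic.
  set (pinv := fun k => epsilon (inhabits (fun _ : nat => false)) (fun p => psi p = k)).
  assert (Hpinv : forall k, middle_thirds_cantor k -> psi (pinv k) = k).
  { intros k Hk. unfold pinv. apply epsilon_spec. apply psi_surj; auto. }
  assert (Hpinv2 : forall p, pinv (psi p) = p).
  { intros p. apply psi_inj. apply Hpinv. apply K_psi. }
  exists (fun k => h (pinv k)). split; [|split; [|split; [|split]]].
  - intros k _. eexists; reflexivity.
  - intros k1 k2 H1 H2 E. apply Hinj in E. rewrite <- (Hpinv k1), <- (Hpinv k2), E; auto.
  - intros c [p <-]. exists (psi p). split; [apply K_psi|]. rewrite Hpinv2. reflexivity.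
  - intros U HU.
    exists (fun k => exists k', middle_thirds_cantor k' /\ exists rho, 0 < rho /\
        (forall k'', middle_thirds_cantor k'' -> Rabs (k'' - k') < rho -> U (h (pinv k''))) /\
        Rabs (k - k') < rho).
    split.
    + intros k [k' [Hk' [rho [Hrho [Hall Hd]]]]].
      assert (Hpos : 0 < rho - Rabs (k - k')) by lra.
      exists (mkposreal _ Hpos). intros y Hy. change (Rabs (y - k) < rho - Rabs (k - k')) in Hy.
      exists k'. split; auto. exists rho. repeat split; auto.
      replace (y - k') with ((y - k) + (k - k')) by ring.
      pose proof (Rabs_triang (y - k) (k - k')). lra.
    + intros k Hk. split.
      * intros HUk. destruct (HU _ HUk) as [n Hn].
        exists k. split; auto. exists (/ 3 ^ n). split; [apply inv3_pos|]. split.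
        -- intros k'' Hk'' Hd. apply Hn. apply prefix_agree. apply Hc.
           apply psi_close. rewrite Hpinv, Hpinv; auto.
        -- rewrite Rminus_diag, Rabs_R0. apply inv3_pos.
      * intros [k' [Hk' [rho [Hrho [Hall Hd]]]]]. apply Hall; auto.
  - intros V HV.
    exists (fun c => exists k, middle_thirds_cantor k /\ V k /\ exists n,
        (forall k'', middle_thirds_cantor k'' -> agree n (h (pinv k'')) (h (pinv k)) -> V k'') /\
        agree n c (h (pinv k))).
    split.
    + intros c [k [Hk [HVk [n [Hall Ha]]]]]. exists n. intros y Hy.
      apply prefix_agree in Hy. exists k. repeat split; auto. exists n. split; auto.
      eapply agree_trans; eauto.
    + intros k Hk. split.
      * intros HVk. destruct (HV k HVk) as [eps Heps].
        destruct (pow3_small eps (cond_pos eps)) as [n Hn].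
        destruct (Hic (pinv k) n) as [N HN].
        exists k. repeat split; auto. exists N. split; [|apply agree_refl].
        intros k'' Hk'' Ha. apply Heps. change (Rabs (k'' - k) < eps).
        apply agree_sym in Ha. apply HN in Ha.
        apply psi_agree in Ha. rewrite Hpinv, Hpinv in Ha; auto.
        replace (k'' - k) with (- (k - k'')) by ring. rewrite Rabs_Ropp. lra.
      * intros [k0 [Hk0 [HV0 [n [Hall Ha]]]]]. apply Hall; auto.
Qed.

Close Scope R_scope.

Fixpoint encl (l : list nat) : nat :=
  match l with
  | [] => O
  | a :: l => S (Cantor.to_nat (a, encl l))
  end.

Lemma to_nat_inj p q : Cantor.to_nat p = Cantor.to_nat q -> p = q.
Proof. intros H. rewrite <- (Cantor.cancel_of_to p), <- (Cantor.cancel_of_to q), H. reflexivity. Qed.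

Lemma encl_inj l l' : encl l = encl l' -> l = l'.
Proof.
  revert l'. induction l as [|a l IH]; intros [|a' l'] H; cbn [encl] in H; try discriminate; auto.
  apply Nat.succ_inj in H. apply to_nat_inj in H. injection H as -> H. f_equal. auto.
Qed.

Lemma map_inj {X Y : Type} (g : X -> Y) (Hg : forall a b, g a = g b -> a = b) l l' :
  map g l = map g l' -> l = l'.
Proof.
  revert l'. induction l as [|a l IH]; intros [|a' l'] H; simpl in H; try discriminate; auto.
  injection H as H1 H2. f_equal; auto.
Qed.

Section Hur.
Variables (A : Type) (a0 : A) (enc : A -> nat)
  (Henc : forall a b, enc a = enc b -> a = b)
  (An Bs : (nat -> A) -> Prop) (U : list A -> list nat -> Prop).
Hypothesis HAn : forall x, An x <-> exists y : nat -> nat, forall n, U (prefix x n) (prefix y n).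
Hypothesis Hdisj : forall x, An x -> Bs x -> False.

Definition closedS (K : (nat -> A) -> Prop) :=
  forall x, ~ K x -> exists n, forall y, agree n x y -> ~ K y.

Definition Sep (S : (nat -> A) -> Prop) :=
  exists Ks : nat -> (nat -> A) -> Prop,
    (forall n, closedS (Ks n)) /\ (forall n x, Ks n x -> ~ Bs x) /\
    (forall x, S x -> exists n, Ks n x).

Hypothesis Hnsep : ~ Sep An.

Lemma sep_mono (S S' : (nat -> A) -> Prop) : (forall x, S x -> S' x) -> Sep S' -> Sep S.
Proof. intros H [Ks [H1 [H2 H3]]]. exists Ks. repeat split; auto. Qed.

Lemma sep_closed (S K : (nat -> A) -> Prop) : closedS K -> (forall x, K x -> ~ Bs x) ->
  (forall x, S x -> K x) -> Sep S.
Proof. intros H1 H2 H3. exists (fun _ => K). repeat split; auto. Qed.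

Lemma sep_empty (S : (nat -> A) -> Prop) : (forall x, ~ S x) -> Sep S.
Proof.
  intros H. apply (sep_closed S (fun _ => False)).
  - intros x _. exists O. intros y _ F. exact F.
  - intros x F. destruct F.
  - intros x Hx. exact (H x Hx).
Qed.

Lemma sep_cunion (S : nat -> (nat -> A) -> Prop) : (forall c, Sep (S c)) ->
  Sep (fun x => exists c, S c x).
Proof.
  intros H.
  set (KK := fun c => epsilon (inhabits (fun (_ : nat) (_ : nat -> A) => False))
    (fun Ks => (forall n, closedS (Ks n)) /\ (forall n x, Ks n x -> ~ Bs x) /\
    (forall x, S c x -> exists n, Ks n x))).
  assert (HK : forall c, (forall n, closedS (KK c n)) /\ (forall n x, KK c n x -> ~ Bs x) /\
    (forall x, S c x -> exists n, KK c n x)).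
  { intros c. unfold KK. apply epsilon_spec. apply H. }
  exists (fun m => let (c, n) := Cantor.of_nat m in KK c n). repeat split.
  - intros m. destruct (Cantor.of_nat m) as [c n]. apply HK.
  - intros m x. destruct (Cantor.of_nat m) as [c n]. apply HK.
  - intros x [c Hc]. destruct (proj2 (proj2 (HK c)) x Hc) as [n Hn].
    exists (Cantor.to_nat (c, n)). rewrite Cantor.cancel_of_to. auto.
Qed.

Lemma sep_union2 (S1 S2 : (nat -> A) -> Prop) : Sep S1 -> Sep S2 ->
  Sep (fun x => S1 x \/ S2 x).
Proof.
  intros H1 H2.
  apply (sep_mono _ (fun x => exists c, (fun c x => match c with O => S1 x | _ => S2 x end) c x)).
  - intros x [Hx|Hx]; [exists O|exists 1%nat]; auto.
  - apply sep_cunion. intros [|c]; auto.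
Qed.

Definition inbox (cx : nat -> A) (cy : nat -> nat) (nx ny : nat) x y :=
  agree nx x cx /\ agree ny y cy.

Definition Fpt x y := forall n, U (prefix x n) (prefix y n).

Definition bad cx cy nx ny := Sep (fun x => exists y, Fpt x y /\ inbox cx cy nx ny x y).

Definition Wpt x y := exists cx cy nx ny, bad cx cy nx ny /\ inbox cx cy nx ny x y.

Definition Zpt x y := Fpt x y /\ ~ Wpt x y.

Definition code (cx : nat -> A) (cy : nat -> nat) nx ny : nat :=
  Cantor.to_nat (Cantor.to_nat (nx, ny),
     Cantor.to_nat (encl (map enc (prefix cx nx)), encl (prefix cy ny))).

Lemma code_inj cx cy nx ny cx' cy' nx' ny' : code cx cy nx ny = code cx' cy' nx' ny' ->
  nx = nx' /\ ny = ny' /\ agree nx cx cx' /\ agree ny cy cy'.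
Proof.
  unfold code. intros H. apply to_nat_inj in H.
  pose proof (f_equal fst H) as H1. pose proof (f_equal snd H) as H2. cbn [fst snd] in H1, H2.
  apply to_nat_inj in H1. apply to_nat_inj in H2.
  pose proof (f_equal fst H1) as H4. pose proof (f_equal snd H1) as H5. cbn [fst snd] in H4, H5.
  subst nx' ny'.
  pose proof (f_equal snd H2) as H3. pose proof (f_equal fst H2) as H6. cbn [fst snd] in H3, H6.
  rename H6 into H2'. clear H2. rename H2' into H2.
  apply encl_inj, map_inj in H2; auto. apply encl_inj in H3.
  repeat split; auto; apply prefix_agree; auto.
Qed.

Lemma inbox_same cx cy nx ny cx' cy' x y : agree nx cx cx' -> agree ny cy cy' ->
  inbox cx cy nx ny x y -> inbox cx' cy' nx ny x y.
Proof.
  intros H1 H2 [H3 H4]. split; eapply agree_trans; eauto.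
Qed.

Lemma projW_sep : Sep (fun x => exists y, Fpt x y /\ Wpt x y).
Proof.
  apply (sep_mono _ (fun x => exists c, (fun c x => exists cx cy nx ny, bad cx cy nx ny /\
      code cx cy nx ny = c /\ exists y, Fpt x y /\ inbox cx cy nx ny x y) c x)).
  - intros x [y [HF [cx [cy [nx [ny [Hb Hi]]]]]]].
    exists (code cx cy nx ny), cx, cy, nx, ny. repeat split; auto. exists y. split; auto.
  - apply sep_cunion. intros c.
    destruct (classic (exists cx cy nx ny, bad cx cy nx ny /\ code cx cy nx ny = c))
      as [[cx [cy [nx [ny [Hb Hc]]]]]|Hn].
    + eapply sep_mono; [|exact Hb].
      intros x [cx' [cy' [nx' [ny' [_ [Hc' [y [HF Hi]]]]]]]].
      rewrite <- Hc in Hc'. apply code_inj in Hc' as [-> [-> [Ha1 Ha2]]].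
      exists y. split; auto. eapply inbox_same; eauto.
    + apply sep_empty. intros x [cx [cy [nx [ny [Hb [Hc _]]]]]]. apply Hn.
      exists cx, cy, nx, ny. auto.
Qed.

Lemma zsep_bad cx cy nx ny :
  Sep (fun x => exists y, Zpt x y /\ inbox cx cy nx ny x y) -> bad cx cy nx ny.
Proof.
  intros H. unfold bad.
  eapply sep_mono; [|exact (sep_union2 _ _ H projW_sep)].
  intros x [y [HF Hi]]. destruct (classic (Wpt x y)) as [HW|HW].
  - right. exists y. auto.
  - left. exists y. split; auto. split; auto.
Qed.

Lemma Z_ne : exists x y, Zpt x y.
Proof.
  apply NNPP. intros Hn. apply Hnsep.
  eapply sep_mono; [|exact projW_sep].
  intros x Hx. apply HAn in Hx as [y Hy]. exists y. split; auto.
  apply NNPP. intros HW. apply Hn. exists x, y. split; auto.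
Qed.

Lemma Z_nsep cx cy nx ny x y : Zpt x y -> inbox cx cy nx ny x y ->
  ~ Sep (fun x => exists y, Zpt x y /\ inbox cx cy nx ny x y).
Proof.
  intros [HF HW] Hi Hs. apply zsep_bad in Hs. apply HW. exists cx, cy, nx, ny. auto.
Qed.

Lemma Z_An x y : Zpt x y -> An x.
Proof. intros [HF _]. apply HAn. exists y. exact HF. Qed.

Lemma Bclose cx cy nx ny x y : Zpt x y -> inbox cx cy nx ny x y ->
  exists bp, Bs bp /\ forall m, exists x' y', Zpt x' y' /\ inbox cx cy nx ny x' y' /\ agree m x' bp.
Proof.
  intros HZ Hi. apply NNPP. intros Hn. apply (Z_nsep cx cy nx ny x y HZ Hi).
  apply (sep_closed _ (fun p => forall m, exists x' y', Zpt x' y' /\ inbox cx cy nx ny x' y' /\ agree m x' p)).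
  - intros p Hp. apply not_all_ex_not in Hp as [m Hm]. exists m. intros q Hq Kq.
    apply Hm. destruct (Kq m) as [x' [y' [H1 [H2 H3]]]]. exists x', y'. split; [|split]; auto.
    eapply agree_trans; [exact H3|]. apply agree_sym; auto.
  - intros p Kp Bp. apply Hn. exists p. split; auto.
  - intros x' [y' [H1 H2]] m. exists x', y'. split; [|split]; auto. apply agree_refl.
Qed.


Record node := mkN { db : nat -> A; dcx : nat -> A; dcy : nat -> nat; dnx : nat; dny : nat }.

Definition Inv (D : node) :=
  Bs (db D) /\
  (forall m, exists x y, Zpt x y /\ inbox (dcx D) (dcy D) (dnx D) (dny D) x y /\ agree m x (db D)) /\
  agree (dnx D) (db D) (dcx D).

Definition Spec (D : node) (d : nat) (pr : node * node) :=
  exists x y m, Zpt x y /\ inbox (dcx D) (dcy D) (dnx D) (dny D) x y /\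
    (dnx D < m)%nat /\ (dny D < m)%nat /\ (d < m)%nat /\ ~ agree m x (db D) /\
    fst pr = mkN (db D) (db D) (dcy D) m (dny D) /\
    dcx (snd pr) = x /\ dcy (snd pr) = y /\ dnx (snd pr) = m /\ dny (snd pr) = m /\
    Inv (fst pr) /\ Inv (snd pr).

Lemma neq_fun_ex (x b : nat -> A) : x <> b -> exists i, x i <> b i.
Proof.
  intros H. apply NNPP. intros Hn. apply H. apply functional_extensionality.
  intros i. apply NNPP. intros Hi. apply Hn. exists i. auto.
Qed.

Lemma spec_ex D d : Inv D -> exists pr, Spec D d pr.
Proof.
  intros [HB [HJ2 HJ3]].
  destruct (HJ2 O) as [x [y [HZ [Hi _]]]].
  assert (Hxb : x <> db D). { intros E. apply (Hdisj x); [eapply Z_An; eauto|]. rewrite E; auto. }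
  destruct (neq_fun_ex _ _ Hxb) as [i Hxi].
  set (m := S (Nat.max (Nat.max (dnx D) (dny D)) (Nat.max d i))).
  destruct (Bclose x y m m x y HZ (conj (agree_refl _ _) (agree_refl _ _))) as [bp [HBp Hbp]].
  exists (mkN (db D) (db D) (dcy D) m (dny D), mkN bp x y m m).
  exists x, y, m. cbn [fst snd dcx dcy dnx dny db].
  split; auto. split; auto.
  split; [unfold m; lia|]. split; [unfold m; lia|]. split; [unfold m; lia|].
  split. { intros Ha. apply Hxi. apply Ha. unfold m; lia. }
  split; auto. repeat (split; [reflexivity|]).
  split.
  - unfold Inv; cbn [db dcx dcy dnx dny]. split; auto. split; [|apply agree_refl].
    intros m''. destruct (HJ2 (Nat.max m'' m)) as [x2 [y2 [HZ2 [[Hi1 Hi2] Ha2]]]].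
    exists x2, y2. split; auto. split.
    + split; auto. eapply agree_le; [exact Ha2|lia].
    + eapply agree_le; [exact Ha2|lia].
  - unfold Inv; cbn [db dcx dcy dnx dny]. split; auto. split; auto.
    destruct (Hbp m) as [x' [y' [_ [[Hi1 _] Ha]]]].
    eapply agree_trans; [apply agree_sym; exact Ha|exact Hi1].
Qed.

Definition defaultN := mkN (fun _ => a0) (fun _ => a0) (fun _ => O) O O.

Definition split2 D d := epsilon (inhabits (defaultN, defaultN)) (Spec D d).
Definition child (c : bool) D d := if c then snd (split2 D d) else fst (split2 D d).

Lemma root_ex : exists D, Inv D.
Proof.
  destruct Z_ne as [x [y HZ]].
  destruct (Bclose x y O O x y HZ (conj (agree_refl _ _) (agree_refl _ _))) as [bp [HBp Hbp]].
  exists (mkN bp x y O O). unfold Inv; cbn [db dcx dcy dnx dny].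
  split; [exact HBp|]. split; [exact Hbp|]. intros i Hi; lia.
Qed.

Definition root := epsilon (inhabits defaultN) Inv.

Fixpoint pn (p : nat -> bool) (n : nat) : node :=
  match n with O => root | S n => child (p n) (pn p n) n end.

Lemma split2_spec D d : Inv D -> Spec D d (split2 D d).
Proof. intros H. unfold split2. apply epsilon_spec. apply spec_ex; auto. Qed.

Lemma pn_inv p n : Inv (pn p n).
Proof.
  induction n.
  - simpl. unfold root. apply epsilon_spec. apply root_ex.
  - simpl. destruct (split2_spec (pn p n) n IHn) as [x [y [m H]]].
    unfold child. destruct (p n); tauto.
Qed.

Lemma pn_agree p p' n : agree n p p' -> pn p n = pn p' n.
Proof.
  induction n; intros H; simpl; auto.
  rewrite IHn by (eapply agree_le; [exact H|lia]). rewrite (H n) by lia. reflexivity.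
Qed.

Lemma pn_step p k :
  (dnx (pn p k) < dnx (pn p (S k)))%nat /\ (k < dnx (pn p (S k)))%nat /\
  (dny (pn p k) <= dny (pn p (S k)))%nat /\
  agree (dnx (pn p k)) (dcx (pn p (S k))) (dcx (pn p k)) /\
  agree (dny (pn p k)) (dcy (pn p (S k))) (dcy (pn p k)) /\
  (p k = true -> (k < dny (pn p (S k)))%nat) /\
  (p k = false -> db (pn p (S k)) = db (pn p k) /\ dcx (pn p (S k)) = db (pn p k)).
Proof.
  pose proof (pn_inv p k) as HI.
  destruct (split2_spec (pn p k) k HI) as [x [y [m [HZ [[Hi1 Hi2] [H1 [H2 [H3 [Hna [Hf [Hsx [Hsy [Hsn [Hsm _]]]]]]]]]]]]]].
  destruct HI as [_ [_ HJ3]].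
  simpl. unfold child. destruct (p k).
  - rewrite Hsx, Hsy, Hsn, Hsm. split; [lia|]. split; [lia|]. split; [lia|].
    split; [auto|]. split; [auto|]. split; [intros; lia|]. discriminate.
  - rewrite Hf. cbn [db dcx dcy dnx dny]. split; [lia|]. split; [lia|]. split; [lia|].
    split; [exact HJ3|]. split; [apply agree_refl|]. split; [discriminate|].
    auto.
Qed.

Lemma pn_mono p k k' : (k <= k')%nat ->
  (dnx (pn p k) <= dnx (pn p k'))%nat /\ (dny (pn p k) <= dny (pn p k'))%nat /\
  agree (dnx (pn p k)) (dcx (pn p k')) (dcx (pn p k)) /\
  agree (dny (pn p k)) (dcy (pn p k')) (dcy (pn p k)).
Proof.
  intros H. induction H.
  - repeat split; auto; apply agree_refl.
  - destruct IHle as [H1 [H2 [H3 H4]]].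
    destruct (pn_step p m) as [S1 [_ [S3 [S4 [S5 _]]]]].
    repeat split; try lia.
    + eapply agree_trans; [eapply agree_le; [exact S4|lia]|exact H3].
    + eapply agree_trans; [eapply agree_le; [exact S5|lia]|exact H4].
Qed.

Lemma pn_nx p k : (k <= dnx (pn p k))%nat.
Proof. destruct k; [lia|]. destruct (pn_step p k). lia. Qed.

Definition hmap (p : nat -> bool) : nat -> A := fun i => dcx (pn p (S i)) i.

Lemma hmap_pref p K : agree (dnx (pn p K)) (hmap p) (dcx (pn p K)).
Proof.
  intros i Hi. unfold hmap. destruct (Compare_dec.le_lt_dec (S i) K).
  - destruct (pn_mono p (S i) K) as [_ [_ [H _]]]; auto.
    symmetry. apply H. pose proof (pn_nx p (S i)). lia.
  - destruct (pn_mono p K (S i)) as [_ [_ [H _]]]; [lia|]. apply H. auto.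
Qed.

Lemma hmap_cont p p' n : agree n p p' -> agree n (hmap p) (hmap p').
Proof.
  intros H. pose proof (hmap_pref p n). pose proof (hmap_pref p' n).
  rewrite (pn_agree p p' n H) in H0. pose proof (pn_nx p' n).
  eapply agree_trans; [eapply agree_le; [exact H0|lia]|].
  apply agree_sym. eapply agree_le; [exact H1|lia].
Qed.

Lemma hmap_distinct p p' k : agree k p p' -> p k <> p' k ->
  ~ agree (dnx (pn p (S k))) (hmap p) (hmap p').
Proof.
  intros Ha Hne Hh.
  pose proof (pn_agree p p' k Ha) as E.
  pose proof (pn_inv p k) as HI.
  destruct (split2_spec (pn p k) k HI) as [x [y [m [HZ [[Hi1 Hi2] [H1 [H2 [H3 [Hna [Hf [Hsx [Hsy [Hsn [Hsm _]]]]]]]]]]]]]].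
  pose proof (hmap_pref p (S k)) as P1. pose proof (hmap_pref p' (S k)) as P2.
  simpl in P1, P2, Hh. rewrite <- E in P2.
  unfold child in P1, P2, Hh.
  destruct (p k), (p' k); try congruence; rewrite ?Hf in *; cbn [dcx dnx] in *;
    rewrite ?Hsx, ?Hsn in *; apply Hna.
  - eapply agree_trans; [apply agree_sym; exact P1|].
    eapply agree_trans; [exact Hh|]. exact P2.
  - eapply agree_trans; [apply agree_sym; exact P2|].
    eapply agree_trans; [apply agree_sym; exact Hh|]. exact P1.
Qed.


Lemma first_diff (p p' : nat -> bool) : p <> p' -> exists k, agree k p p' /\ p k <> p' k.
Proof.
  intros H. apply NNPP. intros Hn. apply H. apply functional_extensionality.
  assert (forall k, agree k p p').
  { induction k. intros i Hi; lia.
    intros i Hi. destruct (Nat.eq_dec i k).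
    - subst. apply NNPP. intros Hne. apply Hn. exists k. auto.
    - apply IHk. lia. }
  intros i. apply (H0 (S i)). lia.
Qed.

Lemma hmap_inj p p' : hmap p = hmap p' -> p = p'.
Proof.
  intros E. apply NNPP. intros Hne. destruct (first_diff p p' Hne) as [k [Ha Hk]].
  apply (hmap_distinct p p' k Ha Hk). rewrite E. apply agree_refl.
Qed.

Lemma hmap_icont p n : exists N, forall p', agree N (hmap p) (hmap p') -> agree n p p'.
Proof.
  exists (dnx (pn p n)). induction n; intros p' H.
  - intros i Hi; lia.
  - assert (Ha : agree n p p').
    { apply IHn. eapply agree_le; [exact H|]. destruct (pn_step p n); lia. }
    intros i Hi. destruct (Nat.eq_dec i n); [|apply Ha; lia]. subst.
    apply NNPP. intros Hne. exact (hmap_distinct p p' n Ha Hne H).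
Qed.

Lemma hmap_B p : eventually_false p -> Bs (hmap p).
Proof.
  intros [k0 Hk0].
  assert (Hdb : forall k, (k0 <= k)%nat -> db (pn p k) = db (pn p k0)).
  { intros k Hk. induction Hk; auto.
    destruct (pn_step p m) as [_ [_ [_ [_ [_ [_ H]]]]]]. rewrite (proj1 (H (Hk0 m Hk))). auto. }
  assert (E : hmap p = db (pn p k0)).
  { apply functional_extensionality. intros i.
    set (K := Nat.max i k0).
    pose proof (hmap_pref p (S K) i) as H1.
    destruct (pn_step p K) as [_ [HnK [_ [_ [_ [_ H]]]]]].
    destruct (H (Hk0 K ltac:(lia))) as [_ H2].
    rewrite H1 by lia. rewrite H2. rewrite Hdb by lia. reflexivity. }
  rewrite E. destruct (pn_inv p k0). auto.
Qed.

Lemma hmap_A p : (forall k0, exists k, (k0 <= k)%nat /\ p k = true) -> An (hmap p).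
Proof.
  intros Hinf.
  set (tk := fun i => epsilon (inhabits O) (fun k => (i <= k)%nat /\ p k = true)).
  assert (Htk : forall i, (i <= tk i)%nat /\ p (tk i) = true).
  { intros i. unfold tk. apply epsilon_spec. apply Hinf. }
  set (ys := fun i => dcy (pn p (S (tk i))) i).
  assert (Hys : forall n, exists K0, forall K, (K0 <= K)%nat ->
            agree n ys (dcy (pn p K)) /\ (n <= dny (pn p K))%nat).
  { induction n.
    - exists O. intros K _. split; [intros i Hi; lia|lia].
    - destruct IHn as [K0 HK0]. exists (Nat.max K0 (S (tk n))). intros K HK.
      destruct (HK0 K ltac:(lia)) as [H1 H2].
      destruct (Htk n) as [Ht1 Ht2].
      destruct (pn_step p (tk n)) as [_ [_ [_ [_ [_ [Hty _]]]]]].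
      specialize (Hty Ht2).
      destruct (pn_mono p (S (tk n)) K ltac:(lia)) as [_ [Hny [_ Hcy]]].
      split; [|lia].
      intros i Hi. destruct (Nat.eq_dec i n); [|apply H1; lia]. subst i.
      unfold ys. symmetry. apply Hcy. lia. }
  apply HAn. exists ys. intros n.
  destruct (Hys n) as [K0 HK0].
  set (K := Nat.max K0 n).
  destruct (HK0 K ltac:(lia)) as [Hy1 Hy2].
  destruct (pn_inv p K) as [_ [HJ2 _]].
  destruct (HJ2 O) as [zx [zy [[HF _] [[Hi1 Hi2] _]]]].
  pose proof (pn_nx p K).
  replace (prefix (hmap p) n) with (prefix zx n).
  replace (prefix ys n) with (prefix zy n).
  - apply HF.
  - apply prefix_agree. eapply agree_trans; [eapply agree_le; [exact Hi2|lia]|].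
    apply agree_sym. auto.
  - apply prefix_agree. eapply agree_trans; [eapply agree_le; [exact Hi1|lia]|].
    apply agree_sym. eapply agree_le; [apply hmap_pref|lia].
Qed.

End Hur.

Lemma hurewicz (A : Type) (a0 : A) (enc : A -> nat)
  (Henc : forall a b, enc a = enc b -> a = b)
  (An Bs : (nat -> A) -> Prop) (U : list A -> list nat -> Prop) :
  (forall x, An x <-> exists y : nat -> nat, forall n, U (prefix x n) (prefix y n)) ->
  (forall x, An x -> Bs x -> False) ->
  ~ Sep A Bs An ->
  exists h : (nat -> bool) -> nat -> A,
    (forall p p', h p = h p' -> p = p') /\
    (forall p p' n, agree n p p' -> agree n (h p) (h p')) /\
    (forall p n, exists N, forall p', agree N (h p) (h p') -> agree n p p') /\
    (forall p, eventually_false p -> Bs (h p)) /\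
    (forall p, ~ eventually_false p -> An (h p)).
Proof.
  intros HAn Hdisj Hns.
  exists (hmap A a0 Bs U). split; [|split; [|split; [|split]]].
  - exact (hmap_inj A a0 enc Henc An Bs U HAn Hdisj Hns).
  - exact (hmap_cont A a0 enc Henc An Bs U HAn Hdisj Hns).
  - exact (hmap_icont A a0 enc Henc An Bs U HAn Hdisj Hns).
  - exact (hmap_B A a0 enc Henc An Bs U HAn Hdisj Hns).
  - intros p Hp. apply (hmap_A A a0 enc Henc An Bs U HAn Hdisj Hns). intros k0. apply NNPP. intros Hn. apply Hp.
    exists k0. intros k Hk. destruct (p k) eqn:E; auto. exfalso. apply Hn. exists k. auto.
Qed.

Open Scope R_scope.

Fixpoint cnt (P : nat -> Prop) (n : nat) : nat :=
  match n with
  | O => O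
  | S n => (cnt P n + if excluded_middle_informative (P n) then 1 else 0)%nat
  end.

Lemma cnt_le P n : (cnt P n <= n)%nat.
Proof. induction n; simpl; auto. destruct (excluded_middle_informative (P n)); lia. Qed.

Lemma cnt_mono (P Q : nat -> Prop) n m : (forall K, P K -> Q K) -> (n <= m)%nat ->
  (cnt P n <= cnt Q m)%nat.
Proof.
  intros H Hnm. induction Hnm.
  - induction n; simpl; auto.
    destruct (excluded_middle_informative (P n)), (excluded_middle_informative (Q n)); try lia.
    exfalso; auto.
  - simpl. lia.
Qed.

Lemma cnt_big P n N : (N <= cnt P n)%nat -> (0 < N)%nat -> exists K, (N - 1 <= K)%nat /\ P K.
Proof.
  induction n; simpl; intros H H0; [lia|].
  destruct (excluded_middle_informative (P n)).
  - exists n. pose proof (cnt_le P n). split; auto. lia.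
  - apply IHn; lia.
Qed.

Lemma cnt_all P n N : (forall K, (K < N)%nat -> P K) -> (N <= n)%nat -> (N <= cnt P n)%nat.
Proof.
  intros H Hn. induction Hn.
  - clear -H. induction N; simpl; auto.
    destruct (excluded_middle_informative (P N)); [|exfalso; apply n; apply H; lia].
    assert (N <= cnt P N)%nat by (apply IHN; intros; apply H; lia). lia.
  - simpl. lia.
Qed.

Fixpoint mx (g : nat -> R) (n : nat) : R :=
  match n with O => g O | S n => Rmax (mx g n) (g (S n)) end.

Lemma mx_ge g n j : (j <= n)%nat -> g j <= mx g n.
Proof.
  induction n; intros H; simpl.
  - replace j with O by lia. lra.
  - destruct (Nat.eq_dec j (S n)). subst. apply Rmax_r.
    eapply Rle_trans; [apply IHn; lia|apply Rmax_l].
Qed.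

Lemma mx_attained g n : exists j, (j <= n)%nat /\ mx g n = g j.
Proof.
  induction n; simpl.
  - exists O. auto.
  - destruct IHn as [j [Hj E]]. unfold Rmax. destruct (Rle_dec (mx g n) (g (S n))).
    + exists (S n). auto.
    + exists j. split; auto.
Qed.

Lemma fin_bound (P : nat -> nat -> Prop) M :
  (forall i n n', P i n -> (n <= n')%nat -> P i n') ->
  (forall i, (i < M)%nat -> exists n, P i n) ->
  exists n, forall i, (i < M)%nat -> P i n.
Proof.
  intros Hup. induction M; intros H.
  - exists O. intros; lia.
  - destruct IHM as [n Hn]. { intros; apply H; lia. }
    destruct (H M ltac:(lia)) as [n' Hn'].
    exists (Nat.max n n'). intros i Hi. destruct (Nat.eq_dec i M).
    + subst. eapply Hup; [exact Hn'|lia].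
    + eapply Hup; [apply Hn; lia|lia].
Qed.

Lemma mono_incr (g : nat -> nat) N t : (forall n, (g n <= g (S n))%nat) -> (N <= t)%nat ->
  (g N < g t)%nat -> exists n, (N <= n)%nat /\ (n < t)%nat /\ (g n < g (S n))%nat.
Proof.
  intros Hm Hle. induction Hle; intros H; [lia|].
  destruct (Nat.lt_ge_cases (g N) (g m)).
  - destruct IHHle as [n Hn]; auto. exists n. lia.
  - exists m. specialize (Hm m). lia.
Qed.

Lemma mono_chain (g : nat -> nat) : (forall n, (g n <= g (S n))%nat) ->
  forall a b, (a <= b)%nat -> (g a <= g b)%nat.
Proof. intros Hm a b H. induction H; auto. specialize (Hm m). lia. Qed.

Lemma mono_unb (g : nat -> nat) : (forall n, (g n <= g (S n))%nat) ->
  (forall N, exists n, (N <= n)%nat /\ (g n < g (S n))%nat) ->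
  forall M, exists n, (M <= g n)%nat.
Proof.
  intros Hm Hi M. induction M.
  - exists O. lia.
  - destruct IHM as [n0 Hn0]. destruct (Hi n0) as [n [H1 H2]].
    exists (S n). pose proof (mono_chain g Hm n0 n H1). lia.
Qed.

Lemma pigeon (P : nat -> nat -> Prop) K :
  (forall N, exists n, (N <= n)%nat /\ exists j, (j < K)%nat /\ P j n) ->
  exists j, (j < K)%nat /\ forall N, exists n, (N <= n)%nat /\ P j n.
Proof.
  induction K; intros H.
  - destruct (H O) as [n [_ [j [Hj _]]]]. lia.
  - destruct (classic (forall N, exists n, (N <= n)%nat /\ P K n)) as [HK|HK].
    + exists K. split; auto.
    + apply not_all_ex_not in HK as [N1 HN1].
      destruct IHK as [j [Hj Hj2]].
      * intros N. destruct (H (Nat.max N N1)) as [n [Hn [j [Hj HP]]]].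
        exists n. split; [lia|]. exists j. split; auto.
        destruct (Nat.eq_dec j K); [|lia]. subst. exfalso. apply HN1. exists n. split; auto; lia.
      * exists j. split; auto.
Qed.

Definition qen (j : nat) : R :=
  let (a, bc) := Cantor.of_nat j in
  let (b, c) := Cantor.of_nat bc in
  (INR a - INR b) / INR (S c).

Lemma qen_dense a b : a < b -> exists j, a < qen j < b.
Proof.
  intros Hab. destruct (archimed_cor1 (b - a) ltac:(lra)) as [N [HN HN0]].
  destruct N as [|c]; [lia|].
  set (d := INR (S c)).
  assert (Hd : 0 < d) by (apply lt_0_INR; lia).
  destruct (archimed (a * d)) as [H1 H2].
  set (z := up (a * d)) in *.
  assert (Hz : exists u w : nat, IZR z = INR u - INR w).
  { destruct (Z.le_ge_cases 0 z).
    - exists (Z.to_nat z), O. rewrite (INR_IZR_INZ (Z.to_nat z)), Z2Nat.id by lia. simpl. ring.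
    - exists O, (Z.to_nat (- z)). rewrite (INR_IZR_INZ (Z.to_nat (- z))), Z2Nat.id by lia.
      rewrite opp_IZR. simpl. ring. }
  destruct Hz as [u [w Hz]].
  exists (Cantor.to_nat (u, Cantor.to_nat (w, c))).
  unfold qen. rewrite !Cantor.cancel_of_to. fold d. rewrite <- Hz.
  split.
  - apply Rmult_lt_reg_r with d; auto. unfold Rdiv. rewrite Rmult_assoc, Rinv_l by lra. lra.
  - apply Rmult_lt_reg_r with d; auto. unfold Rdiv. rewrite Rmult_assoc, Rinv_l by lra.
    assert (/ d * d = 1) by (field; lra).
    assert ((b - a) * d > 1).
    { apply Rmult_lt_compat_r with (r := d) in HN; auto. rewrite Rinv_l in HN by lra. lra. }
    lra.
Qed.

Section LS.
Variables (A : Type) (T : list A -> Prop) (f : (nat -> A) -> R)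
  (UU : nat -> nat -> (nat -> A) -> Prop).
Hypothesis HUU : forall j k, open_seq (UU j k).
Hypothesis HUUeq : forall j x, body T x -> (f x >= qen j <-> forall k, UU j k x).

Definition Cond j K (s : list A) := forall i k, (i <= K)%nat -> (k <= K)%nat -> qen i <= qen j ->
  forall y, prefix y (length s) = s -> UU i k y.
Definition lev j s := cnt (fun K => Cond j K s) (length s).
Definition candS j s := (j <= lev j s)%nat /\ (lev j (removelast s) < lev j s)%nat.
Definition Wm (s : list A) : R :=
  mx (fun j => if excluded_middle_informative (candS j s) then qen j else - INR (length s)) (length s).

Variables (x : nat -> A) (v : nat -> R).
Hypothesis Hx : body T x.
Hypothesis Hv : forall t, v t = Wm (prefix x (S t)).

Definition L j t := lev j (prefix x t).

Lemma Cond_mono j K t t' : (t <= t')%nat -> Cond j K (prefix x t) -> Cond j K (prefix x t').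
Proof.
  intros Ht H i k Hi Hk Hq y Hy. apply (H i k Hi Hk Hq). rewrite prefix_length in *.
  apply prefix_agree. apply prefix_agree in Hy. eapply agree_le; eauto.
Qed.

Lemma L_mono j t : (L j t <= L j (S t))%nat.
Proof.
  unfold L, lev. rewrite !prefix_length. apply cnt_mono; [|lia].
  intros K. apply Cond_mono. lia.
Qed.

Lemma candS_iff j t : candS j (prefix x (S t)) <-> (j <= L j (S t))%nat /\ (L j t < L j (S t))%nat.
Proof.
  unfold candS, L. rewrite prefix_S at 2. rewrite removelast_last. reflexivity.
Qed.

Lemma v_ge j t : (j <= L j (S t))%nat -> (L j t < L j (S t))%nat -> qen j <= v t.
Proof.
  intros H1 H2. rewrite Hv. unfold Wm.
  assert (Hle : (j <= length (prefix x (S t)))%nat).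
  { pose proof (cnt_le (fun K => Cond j K (prefix x (S t))) (length (prefix x (S t)))).
    unfold L, lev in H1. lia. }
  pose proof (mx_ge (fun j0 => if excluded_middle_informative (candS j0 (prefix x (S t)))
     then qen j0 else - INR (length (prefix x (S t)))) (length (prefix x (S t))) j Hle) as Hm.
  cbv beta in Hm.
  destruct (excluded_middle_informative (candS j (prefix x (S t)))) as [_|Hn]; [exact Hm|].
  exfalso. apply Hn. apply candS_iff. auto.
Qed.

Lemma v_attained t : - INR (S t) < v t ->
  exists j, (j <= L j (S t))%nat /\ (L j t < L j (S t))%nat /\ v t = qen j.
Proof.
  intros H. rewrite Hv in *. unfold Wm in *.
  destruct (mx_attained (fun j => if excluded_middle_informative (candS j (prefix x (S t)))
     then qen j else - INR (length (prefix x (S t)))) (length (prefix x (S t)))) as [j [_ E]].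
  rewrite E in *. exists j.
  destruct (excluded_middle_informative _) as [Hc|Hc].
  - apply candS_iff in Hc. tauto.
  - rewrite prefix_length in H. lra.
Qed.

Lemma L_unb j : f x >= qen j -> forall M, exists t, (M <= L j t)%nat.
Proof.
  intros Hf M.
  assert (HK : forall K, exists t0, forall t, (t0 <= t)%nat -> Cond j K (prefix x t)).
  { intros K.
    assert (Hik : forall i, (i < S K)%nat -> exists n, forall k, (k < S K)%nat ->
       qen i <= qen j -> forall y, agree n y x -> UU i k y).
    { intros i Hi. apply (fin_bound (fun k n => qen i <= qen j -> forall y, agree n y x -> UU i k y)).
      - intros k n n' H Hnn' Hq y Hy. apply H; auto. eapply agree_le; eauto.
      - intros k Hk. destruct (Rle_dec (qen i) (qen j)) as [Hq|Hq].
        + assert (UU i k x). { apply (HUUeq i x Hx). lra. }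
          destruct (HUU i k x H) as [n Hn]. exists n. intros _ y Hy.
          apply Hn. apply prefix_agree. auto.
        + exists O. intros Hq'. lra. }
    destruct (fin_bound (fun i n => forall k, (k < S K)%nat ->
       qen i <= qen j -> forall y, agree n y x -> UU i k y) (S K)) as [n Hn].
    { intros i n n' H Hnn' k Hk Hq y Hy. apply H; auto. eapply agree_le; eauto. }
    { exact Hik. }
    exists n. intros t Ht i k Hi Hk Hq y Hy. apply (Hn i ltac:(lia) k ltac:(lia) Hq).
    rewrite prefix_length in Hy. apply prefix_agree in Hy. eapply agree_le; eauto. }
  destruct (fin_bound (fun K t0 => forall t, (t0 <= t)%nat -> Cond j K (prefix x t)) M) as [t0 Ht0].
  { intros K n n' H Hn t Ht. apply H. lia. }
  { intros K _. apply HK. }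
  exists (Nat.max t0 M). unfold L, lev. rewrite prefix_length.
  apply cnt_all; [|lia]. intros K HKM. apply Ht0; auto. lia.
Qed.

Lemma lower j : f x >= qen j -> forall N, exists n, (N <= n)%nat /\ qen j <= v n.
Proof.
  intros Hf N.
  destruct (L_unb j Hf j) as [N2 HN2].
  set (N3 := Nat.max N N2).
  destruct (L_unb j Hf (S (L j N3))) as [t Ht].
  assert (N3 <= t)%nat.
  { destruct (Nat.le_gt_cases N3 t); auto.
    pose proof (mono_chain (L j) (L_mono j) t N3 ltac:(lia)). lia. }
  destruct (mono_incr (L j) N3 t (L_mono j) H ltac:(lia)) as [n [Hn1 [Hn2 Hn3]]].
  exists n. split; [lia|]. apply v_ge; auto.
  pose proof (mono_chain (L j) (L_mono j) N2 (S n) ltac:(lia)). lia.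
Qed.

Lemma upper m : f x < qen m -> forall c, qen m < c ->
  exists N, forall n, (N <= n)%nat -> v n < c.
Proof.
  intros Hfm c Hc. apply NNPP. intros Hn.
  assert (Hinf : forall N, exists n, (N <= n)%nat /\ c <= v n).
  { intros N. apply NNPP. intros H. apply Hn. exists N. intros n Hn'.
    apply Rnot_le_lt. intros Hle. apply H. exists n. auto. }
  destruct (archimed_cor1 1 ltac:(lra)) as [_ _].
  destruct (INR_unbounded (Rabs c)) as [N0 HN0].
  set (P := fun j n => (N0 <= n)%nat /\ (j <= L j (S n))%nat /\ (L j n < L j (S n))%nat /\ qen m < qen j).
  assert (HP : forall N, exists n, (N <= n)%nat /\ exists j, P j n).
  { intros N. destruct (Hinf (Nat.max N N0)) as [n [Hn1 Hn2]].
    assert (- INR (S n) < v n).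
    { pose proof (Rle_abs (- c)). rewrite Rabs_Ropp in H.
      assert (INR N0 <= INR (S n)) by (apply le_INR; lia). lra. }
    destruct (v_attained n H) as [j [H1 [H2 H3]]].
    exists n. split; [lia|]. exists j. unfold P. repeat split; auto; try lia. lra. }
  destruct (classic (forall K, exists n j, P j n /\ (K <= L j (S n))%nat)) as [HA|HB].
  - assert (Hall : forall k, UU m k x).
    { intros k. destruct (HA (S (Nat.max k m))) as [n [j [[_ [_ [_ Hq]]] HL]]].
      unfold L, lev in HL. destruct (cnt_big _ _ _ HL ltac:(lia)) as [K [HK1 HK2]].
      apply (HK2 m k ltac:(lia) ltac:(lia) ltac:(lra)). rewrite prefix_length. reflexivity. }
    apply (HUUeq m x Hx) in Hall. lra.
  - apply not_all_ex_not in HB as [K HK].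
    assert (HK' : forall n j, P j n -> (L j (S n) < K)%nat).
    { intros n j Hp. apply Nat.nle_gt. intros Hle. apply HK. exists n, j. auto. }
    destruct (pigeon P K) as [j [Hj Hj2]].
    { intros N. destruct (HP N) as [n [Hn1' [j Hp]]]. exists n. split; auto.
      exists j. split; auto. pose proof (HK' n j Hp). destruct Hp as [_ [H1 _]]. lia. }
    destruct (mono_unb (L j) (L_mono j)) with (M := K) as [n0 Hn0].
    { intros N. destruct (Hj2 N) as [n [Hn' [_ [_ [Hl _]]]]]. exists n. auto. }
    destruct (Hj2 n0) as [n [Hn' Hp]].
    pose proof (HK' n j Hp).
    pose proof (mono_chain (L j) (L_mono j) n0 (S n) ltac:(lia)). lia.
Qed.

Lemma ls_ok : is_LimSup_seq v (f x).
Proof.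
  intros eps. split.
  - intros N. destruct (qen_dense (f x - eps) (f x) ltac:(destruct eps; simpl; lra)) as [j [Hj1 Hj2]].
    destruct (lower j ltac:(lra) N) as [n [Hn1 Hn2]]. exists n. split; auto. lra.
  - destruct (qen_dense (f x) (f x + eps) ltac:(destruct eps; simpl; lra)) as [m [Hm1 Hm2]].
    apply (upper m); auto.
Qed.

End LS.

Lemma play_fix (A : Type) (sigma : list R -> A) (W : list A -> R) :
  exists v : nat -> R, forall t, v t = W (prefix (play_I sigma v) (S t)).
Proof.
  set (st := fix st (t : nat) : list A * list R :=
    match t with
    | O => ([], [])
    | S t => (fst (st t) ++ [sigma (snd (st t))],
              snd (st t) ++ [W (fst (st t) ++ [sigma (snd (st t))])])
    end).
  set (v := fun t => last (snd (st (S t))) 0).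
  assert (Hv : forall t, v t = W (fst (st t) ++ [sigma (snd (st t))])).
  { intros t. unfold v. simpl. rewrite last_last. reflexivity. }
  assert (H : forall t, snd (st t) = prefix v t /\ fst (st t) = prefix (play_I sigma v) t).
  { induction t.
    - split; reflexivity.
    - destruct IHt as [H1 H2]. rewrite !prefix_S. split.
      + change (snd (st (S t))) with (snd (st t) ++ [W (fst (st t) ++ [sigma (snd (st t))])]).
        rewrite <- Hv, H1. reflexivity.
      + change (fst (st (S t))) with (fst (st t) ++ [sigma (snd (st t))]).
        rewrite H2, H1. reflexivity. }
  exists v. intros t. rewrite Hv. rewrite prefix_S. destruct (H t) as [H1 H2].
  rewrite H2, H1. reflexivity.
Qed.

Definition GD {A : Type} (T : list A -> Prop) (f : (nat -> A) -> R) (r : R) :=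
  exists Uk : nat -> (nat -> A) -> Prop, (forall k, open_seq (Uk k)) /\
    forall x, body T x -> (f x >= r <-> forall k, Uk k x).

Lemma II_beats (A : Type) (T : list A -> Prop) (f : (nat -> A) -> R) (sigma : list R -> A) :
  is_tree T -> (forall r, GD T f r) -> I_winning_strategy T f sigma -> False.
Proof.
  intros Htree HG Hs.
  set (UU := fun j => epsilon (inhabits (fun (_ : nat) (_ : nat -> A) => False))
     (fun Uk => (forall k, open_seq (Uk k)) /\
        forall x, body T x -> (f x >= qen j <-> forall k, Uk k x))).
  assert (HUU : forall j, (forall k, open_seq (UU j k)) /\
        forall x, body T x -> (f x >= qen j <-> forall k, UU j k x)).
  { intros j. unfold UU. apply epsilon_spec. apply HG. }
  destruct (play_fix A sigma (Wm A UU)) as [v Hv].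
  destruct (Hs v) as [Hleg Hne].
  assert (Hx : body T (play_I sigma v)).
  { intros [|n]. apply Htree. apply Hleg. }
  apply Hne. symmetry. apply is_LimSup_seq_unique.
  apply (ls_ok A T f UU (fun j => proj1 (HUU j)) (fun j => proj2 (HUU j)) _ v Hx Hv).
Qed.

Lemma nGD_nSep (A : Type) (T : list A -> Prop) (f : (nat -> A) -> R) r :
  ~ GD T f r ->
  ~ Sep A (fun x => body T x /\ f x >= r) (fun x => body T x /\ ~ (body T x /\ f x >= r)).
Proof.
  intros HG [Ks [HK1 [HK2 HK3]]]. apply HG.
  exists (fun k x => ~ Ks k x). split.
  - intros k x Hx. destruct (HK1 k x Hx) as [n Hn]. exists n. intros y Hy.
    apply Hn. apply agree_sym. apply prefix_agree. auto.
  - intros x Hx. split.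
    + intros Hf k HKx. apply (HK2 k x HKx). auto.
    + intros Hall. apply NNPP. intros Hf. destruct (HK3 x) as [n Hn].
      { split; auto. intros [_ H]. auto. }
      apply (Hall n Hn).
Qed.

Theorem mainTheorem11 (A : Type) (T : list A -> Prop) (f : (nat -> A) -> R) :
  inhabited A -> countable_type A ->
  is_tree T -> is_pruned T ->
  semi_Borel T f ->
  (exists sigma : list R -> A, I_winning_strategy T f sigma) ->
  exists (r : R) (C : (nat -> A) -> Prop),
    (forall x, C x -> body T x) /\ Cantor_set C /\
    countable_set (fun x => C x /\ f x >= r) /\
    dense_in (fun x => C x /\ f x >= r) C.
Proof.
  intros [a0] [enc Henc] Htree _ Hsb [sigma Hs].
  destruct (classic (forall r, GD T f r)) as [HG|HG].
  { exfalso. exact (II_beats A T f sigma Htree HG Hs). }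
  apply not_all_ex_not in HG as [r Hr].
  destruct (Hsb r) as [U HU].
  set (Bs := fun x => body T x /\ f x >= r).
  set (An := fun x => body T x /\ ~ (body T x /\ f x >= r)).
  destruct (hurewicz A a0 enc Henc An Bs U HU) as [h [Hinj [Hc [Hic [HB HA]]]]].
  { intros x [_ H1] H2. apply H1. exact H2. }
  { apply nGD_nSep. exact Hr. }
  exists r, (fun c => exists p, h p = c).
  split; [|split; [|split]].
  - intros x [p <-]. destruct (classic (eventually_false p)) as [H|H].
    + apply HB in H. apply H.
    + apply HA in H. apply H.
  - apply cantor_wrap; auto.
  - exists (fun n => h (fun i => Nat.testbit n i)).
    intros x [[p <-] Hf]. destruct (classic (eventually_false p)) as [H|H].
    + destruct (testbit_surj p H) as [n Hn]. exists n. f_equal.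
      apply functional_extensionality. auto.
    + apply HA in H. exfalso. apply H. split; [apply H|exact Hf].
  - intros c n [p <-].
    set (p' := fun i => if Nat.ltb i n then p i else false).
    assert (Ha : agree n p p').
    { intros i Hi. unfold p'. rewrite (proj2 (Nat.ltb_lt i n) Hi). reflexivity. }
    assert (He : eventually_false p').
    { exists n. intros k Hk. unfold p'. rewrite (proj2 (Nat.ltb_ge k n) Hk). reflexivity. }
    exists (h p'). split.
    + split; [exists p'; reflexivity|]. apply (HB p' He).
    + apply prefix_agree. apply agree_sym. apply Hc. exact Ha.
Qed.
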